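(* Let $A$ be a finite alphabet, $f$ a bLSP morphism on $A$ and $a,b,c$ pairwise distinct letters of $A$. Then $f$ is LSP $(a,b,c)$-breaking if and only if the longest common prefix of $f(b)$ and $f(c)$ is strictly longer than the longest common prefix of $f(a)$ and $f(b)$.
   Context: A finite word $u$ is a left special factor of a word $w$ if there are distinct letters $x\neq y$ with $xu$ and $yu$ factors of $w$. A word is LSP if every left special factor of it is a prefix of it. A bLSP morphism on $A$ is an endomorphism $f$ of $A^*$ such that there is a letter $\alpha$ with $f(\alpha)=\alpha$ and, for every letter $\beta\neq\alpha$, there is a letter $\gamma$ with $f(\beta)=f(\gamma)\beta$. For pairwise distinct letters $a,b,c$, an infinite word $\mathbf{w}$ is $(a,b,c)$-fragile if there exist a finite word $u$ and distinct letters $\beta\neq\gamma$ such that $ua$ is a prefix of $\mathbf{w}$ and $\beta ub$, $\gamma uc$ are factors of $\mathbf{w}$. A morphism $f$ is LSP $(a,b,c)$-breaking if for every $(a,b,c)$-fragile infinite LSP word $\mathbf{w}$, $f(\mathbf{w})$ is not LSP. *)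

(* Defs.v *)
From mathcomp Require Import all_boot.
Set Implicit Arguments. Unset Strict Implicit. Unset Printing Implicit Defensive.

Section Words.
Variable A : finType.

Definition morph (f : A -> seq A) (w : seq A) : seq A := flatten (map f w).

Definition iword := nat -> A.

(* Image of an infinite word under a non-erasing morphism f:
   letter n of f(w) is letter n of f(w_0 ... w_n) (which has length >= n+1
   when f is non-erasing, as every bLSP morphism is). *)
Definition morph_inf (f : A -> seq A) (w : iword) : iword :=
  fun n => nth (w 0) (morph f (mkseq w n.+1)) n.

Definition iprefix (u : seq A) (w : iword) : Prop :=
  forall j, j < size u -> w j = nth (w 0) u j.

Definition ifactor (u : seq A) (w : iword) : Prop :=
  exists i, forall j, j < size u -> w (i + j) = nth (w 0) u j.

Definition left_special (u : seq A) (w : iword) : Prop :=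
  exists x y : A, x <> y /\ ifactor (x :: u) w /\ ifactor (y :: u) w.

Definition LSP (w : iword) : Prop :=
  forall u, left_special u w -> iprefix u w.

Definition bLSP (f : A -> seq A) : Prop :=
  exists alpha : A, f alpha = [:: alpha] /\
    forall beta, beta <> alpha -> exists gamma, f beta = f gamma ++ [:: beta].

Definition fragile (a b c : A) (w : iword) : Prop :=
  exists (u : seq A) (beta gamma : A), beta <> gamma /\
    iprefix (rcons u a) w /\ ifactor (beta :: rcons u b) w /\
    ifactor (gamma :: rcons u c) w.

Definition LSP_breaking (f : A -> seq A) (a b c : A) : Prop :=
  forall w : iword, fragile a b c w -> LSP w -> ~ LSP (morph_inf f w).

Fixpoint lcp (u v : seq A) : nat :=
  match u, v with
  | x :: u', y :: v' => if x == y then (lcp u' v').+1 else 0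
  | _, _ => 0
  end.

End Words.

(* Main.v *)
Require Import Defs.
From mathcomp Require Import all_boot zify.
Set Implicit Arguments. Unset Strict Implicit.

Definition goodf (A : finType) (f : A -> seq A) (alpha : A) :=
  f alpha = [:: alpha] /\ forall beta, beta <> alpha -> exists gamma, f beta = f gamma ++ [:: beta].

Lemma gf_head (A : finType) f (alpha : A) : goodf f alpha ->
  forall x, exists t, f x = alpha :: t /\ alpha \notin t.
Proof.
move=> [Ha Hb] x.
move: {2}(size (f x)) (leqnn (size (f x))) => n; elim: n x => [|n IH] x Hs.
  case: (eqVneq x alpha) => [Ex|/eqP Hx]; first by rewrite Ex Ha in Hs.
  by case: (Hb x Hx) => g Hg; rewrite Hg size_cat addn1 in Hs.
case: (eqVneq x alpha) => [->|/eqP Hx]; first by exists [::]; rewrite Ha.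
case: (Hb x Hx) => g Hg.
have [t [Ht Hn]] : exists t, f g = alpha :: t /\ alpha \notin t.
  by apply: IH; move: Hs; rewrite Hg size_cat addn1 ltnS.
exists (t ++ [:: x]); rewrite Hg Ht; split => //.
by rewrite mem_cat negb_or Hn /= inE eq_sym; apply/eqP.
Qed.

Lemma gf_last (A : finType) f (alpha : A) : goodf f alpha ->
  forall x, exists t, f x = rcons t x.
Proof.
move=> [Ha Hb] x.
case: (eqVneq x alpha) => [->|/eqP Hx]; first by exists [::]; rewrite Ha.
by case: (Hb x Hx) => g Hg; exists (f g); rewrite Hg cats1.
Qed.

Lemma gf_inj (A : finType) f (alpha : A) : goodf f alpha ->
  forall x y, f x = f y -> x = y.
Proof.
move=> H x y E; case: (gf_last H x) => t Ht; case: (gf_last H y) => t' Ht'.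
by move: (congr1 (last x) E); rewrite Ht Ht' !last_rcons.
Qed.

Lemma gf_take (A : finType) f (alpha : A) : goodf f alpha ->
  forall x k, 0 < k <= size (f x) -> take k (f x) = f (nth alpha (f x) k.-1).
Proof.
move=> [Ha Hb] x.
move: {2}(size (f x)) (leqnn (size (f x))) => n; elim: n x => [|n IH] x Hs k Hk.
  by move: Hs Hk; case: (size (f x)) => //; case: k.
case: (eqVneq x alpha) => [Ex|/eqP Hx].
  by rewrite Ex Ha in Hk *; case: k Hk => [|[|]].
case: (Hb x Hx) => g Hg.
have Hk' := Hk; rewrite Hg size_cat addn1 in Hk'.
case/andP: Hk' => Hk0; rewrite leq_eqVlt => /orP [/eqP Ek|Hlt].
  rewrite Hg Ek -{1}(addn1 (size (f g))) -(size_cat (f g) [:: x]) take_size nth_cat.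
  rewrite /= ltnn subnn /=; by rewrite -Hg.
rewrite Hg takel_cat; last by [].
rewrite nth_cat; have -> : k.-1 < size (f g) by lia.
apply: IH; last by lia.
by move: Hs; rewrite Hg size_cat addn1 ltnS.
Qed.

Section L.
Local Notation "'lcpA'" := (@lcp _).

Lemma lcp_le (A : finType) (s t : seq A) : lcp s t <= size s /\ lcp s t <= size t.
Proof.
elim: s t => [|x s IH] [|y t] //=; case: eqP => // _.
by case: (IH t) => H1 H2; rewrite !ltnS.
Qed.

Lemma lcp_nth (A : finType) (d : A) (s t : seq A) j : j < lcp s t -> nth d s j = nth d t j.
Proof.
elim: s t j => [|x s IH] [|y t] j //=; case: eqP => // -> .
by case: j => //= j; rewrite ltnS; apply: IH.
Qed.

Lemma lcp_neq (A : finType) (d : A) (s t : seq A) :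
  lcp s t < size s -> lcp s t < size t -> nth d s (lcp s t) <> nth d t (lcp s t).
Proof.
elim: s t => [|x s IH] [|y t] //=; case: eqP => [->|Hne] //=.
by rewrite !ltnS; apply: IH.
Qed.

Lemma lcp_ge (A : finType) (d : A) (s t : seq A) n :
  (forall j, j < n -> nth d s j = nth d t j) -> n <= size s -> n <= size t -> n <= lcp s t.
Proof.
elim: s t n => [|x s IH] [|y t] [|n] //= H Hs Ht.
have -> : x == y by apply/eqP; apply: (H 0).
rewrite ltnS; apply: IH => // j Hj; exact: (H j.+1).
Qed.

Lemma lcpC (A : finType) (s t : seq A) : lcp s t = lcp t s.
Proof.
elim: s t => [|x s IH] [|y t] //=; rewrite eq_sym; case: eqP => // _; by rewrite IH.
Qed.

Lemma lcp_take (A : finType) (s t : seq A) : take (lcp s t) s = take (lcp s t) t.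
Proof.
elim: s t => [|x s IH] [|y t] //=; case: eqP => [->|] //=; by rewrite IH.
Qed.
End L.

Definition pred_of (A : finType) (f : A -> seq A) (alpha z : A) :=
  nth alpha (f z) (size (f z)).-2.

Lemma gf_pred (A : finType) f (alpha : A) : goodf f alpha ->
  forall x j, 0 < j < size (f x) ->
  nth alpha (f x) j.-1 = pred_of f alpha (nth alpha (f x) j).
Proof.
move=> H x j /andP [Hj0 Hj].
have Ht : take j.+1 (f x) = f (nth alpha (f x) j) by apply: (gf_take H); exact: Hj.
have Hs : size (f (nth alpha (f x) j)) = j.+1.
  by rewrite -Ht size_takel.
rewrite /pred_of Hs -Ht nth_take //; lia.
Qed.

Lemma gf_alpha (A : finType) f (alpha : A) : goodf f alpha ->
  forall x j, j < size (f x) -> (nth alpha (f x) j == alpha) = (j == 0).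
Proof.
move=> H x j Hj; case: (gf_head H x) => t [Ht Hn]; rewrite Ht in Hj *.
case: j Hj => [|j] //= Hj; first by rewrite eqxx.
apply/negP => /eqP E; move/negP: Hn; apply; rewrite -E; apply: mem_nth; by [].
Qed.

Lemma gf_size (A : finType) f (alpha : A) : goodf f alpha -> forall x, 0 < size (f x).
Proof. by move=> H x; case: (gf_head H x) => t [-> _]. Qed.

Lemma morph_cat (A : finType) (f : A -> seq A) s t : morph f (s ++ t) = morph f s ++ morph f t.
Proof. by rewrite /morph map_cat flatten_cat. Qed.

Lemma morph_cons (A : finType) (f : A -> seq A) x s : morph f (x :: s) = f x ++ morph f s.
Proof. by []. Qed.

Lemma morph_rcons (A : finType) (f : A -> seq A) s x : morph f (rcons s x) = morph f s ++ f x.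
Proof. by rewrite -cats1 morph_cat /morph /= cats0. Qed.

Lemma size_morph (A : finType) (f : A -> seq A) s :
  (forall x, 0 < size (f x)) -> size s <= size (morph f s).
Proof.
move=> Hf; elim: s => [|x s IH] //=; rewrite morph_cons size_cat.
have := Hf x; lia.
Qed.

Lemma mkseq_add (A : Type) (w : nat -> A) m k :
  exists r, mkseq w (m + k) = mkseq w m ++ r.
Proof. by exists (map w (iota m k)); rewrite /mkseq iotaD map_cat. Qed.

Lemma morph_pre (A : finType) (f : A -> seq A) (w : iword A) d j m :
  (forall x, 0 < size (f x)) -> j < size (morph f (mkseq w m)) ->
  morph_inf f w j = nth d (morph f (mkseq w m)) j.
Proof.
move=> Hf Hj; rewrite /morph_inf.
case: (leqP m j.+1) => Hm.
  case: (mkseq_add w m (j.+1 - m)) => r; rewrite subnKC // => ->.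
  by rewrite morph_cat nth_cat Hj (set_nth_default d).
case: (mkseq_add w j.+1 (m - j.+1)) => r; rewrite subnKC ?(ltnW Hm) // => E.
have Hs : j < size (morph f (mkseq w j.+1)).
  by have := size_morph (mkseq w j.+1) Hf; rewrite size_mkseq.
by rewrite E morph_cat nth_cat Hs (set_nth_default d).
Qed.

Definition sB (A : finType) (f : A -> seq A) (w : iword A) m := size (morph f (mkseq w m)).

Lemma sB0 (A : finType) (f : A -> seq A) (w : iword A) : sB f w 0 = 0.
Proof. by []. Qed.

Lemma sBS (A : finType) (f : A -> seq A) (w : iword A) m :
  sB f w m.+1 = sB f w m + size (f (w m)).
Proof. by rewrite /sB mkseqS morph_rcons size_cat. Qed.

Lemma block_nth (A : finType) (f : A -> seq A) (w : iword A) d m j :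
  (forall x, 0 < size (f x)) -> j < size (f (w m)) ->
  morph_inf f w (sB f w m + j) = nth d (f (w m)) j.
Proof.
move=> Hf Hj.
rewrite (morph_pre d (m := m.+1)) //.
  by rewrite mkseqS morph_rcons nth_cat /sB ltnNge leq_addr /= addKn.
by rewrite -/(sB f w m.+1) sBS ltn_add2l.
Qed.

Lemma block_exists (A : finType) (f : A -> seq A) (w : iword A) :
  (forall x, 0 < size (f x)) -> forall n, exists m, sB f w m <= n < sB f w m.+1.
Proof.
move=> Hf; elim => [|n [m /andP [H1 H2]]].
  by exists 0; rewrite sBS sB0 add0n Hf.
case: (ltnP n.+1 (sB f w m.+1)) => H3.
  by exists m; rewrite H3 andbT; apply: leqW.
exists m.+1; have E : n.+1 = sB f w m.+1 by apply/eqP; rewrite eqn_leq H3 H2.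
by rewrite E leqnn /= (sBS f w m.+1) -addn1 leq_add2l Hf.
Qed.

Lemma fact_mkseq (A : finType) (w : iword A) i s :
  (forall j, j < size s -> w (i + j) = nth (w 0) s j) ->
  mkseq w (i + size s) = mkseq w i ++ s.
Proof.
move=> H; apply: (@eq_from_nth _ (w 0)); first by rewrite size_cat !size_mkseq.

move=> j; rewrite size_mkseq => Hj; rewrite nth_mkseq // nth_cat size_mkseq.
case: (ltnP j i) => Hji; first by rewrite nth_mkseq.
by rewrite -H ?subnKC //; lia.
Qed.

Lemma ifactor_morph (A : finType) (f : A -> seq A) (w : iword A) s :
  (forall x, 0 < size (f x)) -> ifactor s w -> ifactor (morph f s) (morph_inf f w).
Proof.
move=> Hf [i Hi]; exists (sB f w i) => j Hj.
have E := fact_mkseq Hi.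
rewrite (morph_pre (morph_inf f w 0) (m := i + size s)) //.
  by rewrite E morph_cat nth_cat /sB ltnNge leq_addr /= addKn.
by rewrite E morph_cat size_cat ltn_add2l.
Qed.

Lemma ifactor_sub (A : finType) (W : iword A) s1 t s3 :
  ifactor (s1 ++ t ++ s3) W -> ifactor t W.
Proof.
move=> [i Hi]; exists (i + size s1) => j Hj.
rewrite -addnA Hi; last by rewrite !size_cat; lia.
by rewrite nth_cat ltnNge leq_addr /= addKn nth_cat Hj.
Qed.

Lemma pre_mkseq (A : finType) (w : iword A) s : iprefix s w -> mkseq w (size s) = s.
Proof. by move=> H; have := @fact_mkseq A w 0 s H. Qed.

Lemma breaking_if (A : finType) (f : A -> seq A) (alpha a b c : A) : goodf f alpha ->
  lcp (f a) (f b) < lcp (f b) (f c) -> LSP_breaking f a b c.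
Proof.
move=> H Hlt w [u [be [ga [Hbg [Hp [Hfb Hfc]]]]]] _ HW.
have Hf := gf_size H.
set k := lcp (f b) (f c).
have [Hk Hkc] : k <= size (f b) /\ k <= size (f c) by apply: lcp_le.
have F : forall x y : A, ifactor (x :: rcons u y) w ->
    ifactor (x :: (morph f u ++ take k (f y))) (morph_inf f w).
  move=> x y Hx; have := ifactor_morph Hf Hx.
  case: (gf_last H x) => t Ht.
  rewrite morph_cons morph_rcons Ht => Hfac.
  rewrite -(cat_take_drop k (f y)) in Hfac.
  apply: (ifactor_sub (s1 := t) (s3 := drop k (f y))).
  by move: Hfac; rewrite -cats1 cat_cons -!catA.
have HLS : left_special (morph f u ++ take k (f b)) (morph_inf f w).
  exists be, ga; split => //; split; first exact: F.
  by rewrite /k lcp_take; apply: F.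
have Hpre := HW _ HLS.
have Hu := pre_mkseq Hp.
set j0 := lcp (f a) (f b).
have [Hj0a Hj0b] : j0 <= size (f a) /\ j0 <= size (f b) by apply: lcp_le.
set idx := size (morph f u) + j0.
have E1 : morph_inf f w idx = nth alpha (f b) j0.
  rewrite Hpre; last by rewrite size_cat size_takel // ltn_add2l.
  rewrite nth_cat ltnNge leq_addr /= addKn nth_take //.
  by apply: set_nth_default; lia.
set d := w (size (rcons u a)).
have E2 : morph_inf f w idx = nth alpha (f a ++ f d) j0.
  have Hd := Hf d.
  rewrite (morph_pre alpha (m := (size (rcons u a)).+1)) //; rewrite mkseqS Hu -/d.
    by rewrite !morph_rcons -catA nth_cat ltnNge leq_addr /= addKn.
  by rewrite !morph_rcons -catA !size_cat ltn_add2l; lia.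
move: E2; rewrite E1 nth_cat.
case: (ltnP j0 (size (f a))) => Hj.
  by apply/nesym/lcp_neq => //; lia.
have -> : j0 - size (f a) = 0 by lia.
case: (gf_head H d) => td [-> _] /= E.
have Hjb : j0 < size (f b) by lia.
have := gf_alpha H Hjb; rewrite E eqxx => /esym /eqP.
have := gf_size H a; lia.
Qed.

Lemma pos_block (A : finType) (f : A -> seq A) (w : iword A) :
  (forall x, 0 < size (f x)) -> forall n, exists m o, o < size (f (w m)) /\ n = sB f w m + o.
Proof.
move=> Hf n; case: (block_exists w Hf n) => m /andP [H1 H2].
exists m, (n - sB f w m); split; last by rewrite subnKC.
by move: H2; rewrite sBS; lia.
Qed.

Lemma block_start_alpha (A : finType) (f : A -> seq A) (alpha : A) (w : iword A) m :
  goodf f alpha -> morph_inf f w (sB f w m + size (f (w m))) = alpha.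
Proof.
move=> H; rewrite -sBS -[sB f w m.+1]addn0 (block_nth alpha) ?(gf_size H) //.
  by case: (gf_head H (w m.+1)) => t [-> _].
exact: gf_size H.
Qed.

Lemma aux_block (A : finType) (f : A -> seq A) (alpha : A) (w : iword A) m m' j :
  goodf f alpha -> w m <> w m' ->
  (forall i, i < j -> i < size (f (w m)) /\ i < size (f (w m')) /\
      nth alpha (f (w m)) i = nth alpha (f (w m')) i) ->
  morph_inf f w (sB f w m + j) = morph_inf f w (sB f w m' + j) ->
  j < size (f (w m)).
Proof.
move=> H Hne IH E.
have Hf := gf_size H.
case: (ltnP j (size (f (w m)))) => // HPj; exfalso.
have Ej : j = size (f (w m)).
  case: j IH E HPj => [|j] IH E HPj; first by have := Hf (w m); lia.
  by have := (IH j (ltnSn j)).1; lia.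
have Wa := block_start_alpha w m H; rewrite -Ej E in Wa.
case: (ltnP j (size (f (w m')))) => HQj.
  have := gf_alpha H HQj; rewrite -(block_nth alpha (f:=f) (w:=w) (m:=m') (j:=j)) ?(gf_size H) // Wa eqxx.
  by have := Hf (w m); lia.
have Ej' : j = size (f (w m')).
  case: j IH E HPj HQj Ej Wa => [|j] IH E HPj HQj Ej Wa; first by have := Hf (w m); lia.
  by have := (IH j (ltnSn j)).2.1; lia.
apply: Hne; apply: (gf_inj H); apply: (@eq_from_nth _ alpha); first by rewrite -Ej -Ej'.
by move=> i Hi; have := IH i; rewrite {1}Ej => /(_ Hi) [_ [_ ->]].
Qed.

Lemma common_blocks (A : finType) (f : A -> seq A) (alpha : A) (w : iword A) m m' n :
  goodf f alpha -> w m <> w m' ->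
  (forall j, j < n -> morph_inf f w (sB f w m + j) = morph_inf f w (sB f w m' + j)) ->
  forall j, j < n -> j < size (f (w m)) /\ j < size (f (w m')) /\
      nth alpha (f (w m)) j = nth alpha (f (w m')) j.
Proof.
move=> H Hne E; elim/ltn_ind => j IH Hj.
have IH' : forall i, i < j -> i < size (f (w m)) /\ i < size (f (w m')) /\
      nth alpha (f (w m)) i = nth alpha (f (w m')) i.
  by move=> i Hi; apply: IH => //; lia.
have H1 := aux_block H Hne IH' (E j Hj).
have H2 : j < size (f (w m')).
  apply: (aux_block (m' := m) H (nesym Hne)); last by rewrite E.
  by move=> i Hi; case: (IH' i Hi) => [? [? ?]]; split => //; split.
split => //; split => //.
have e1 := @block_nth _ f w alpha m j (gf_size H) H1.
have e2 := @block_nth _ f w alpha m' j (gf_size H) H2.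
by rewrite -e1 -e2 E.
Qed.

Lemma prev_block (A : finType) (f : A -> seq A) (alpha : A) (w : iword A) i m :
  goodf f alpha -> i.+1 = sB f w m -> 0 < m /\ morph_inf f w i = w m.-1.
Proof.
move=> H; case: m => [|m]; first by rewrite sB0.
rewrite sBS => E; split => //=.
have Hs := gf_size H (w m).
have -> : i = sB f w m + (size (f (w m))).-1 by lia.
rewrite (block_nth alpha (gf_size H)); last by lia.
case: (gf_last H (w m)) => t Ht; rewrite Ht size_rcons /= nth_rcons ltnn eqxx //.
Qed.

Lemma bc_case (A : finType) (f : A -> seq A) (alpha a b c : A) P Q j :
  lcp (f b) (f c) <= lcp (f a) (f b) -> j < lcp P Q ->
  (P = f b /\ Q = f c \/ P = f c /\ Q = f b) ->
  j < size (f a) /\ nth alpha (f a) j = nth alpha P j.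
Proof.
move=> Hge Hj HPQ.
have Hj' : j < lcp (f b) (f c).
  by case: HPQ => [[EP EQ]|[EP EQ]]; subst P Q; rewrite // lcpC.
have Hja : j < lcp (f a) (f b) by lia.
split; first by have := (lcp_le (f a) (f b)).1; lia.
rewrite (lcp_nth alpha Hja).
by case: HPQ => [[EP _]|[EP _]]; subst P => //; rewrite (lcp_nth alpha Hj').
Qed.

Lemma LSP_img (A : finType) (f : A -> seq A) (alpha a b c : A) (w : iword A) :
  goodf f alpha -> a <> b -> b <> c -> a <> c ->
  lcp (f b) (f c) <= lcp (f a) (f b) -> w 0 = a ->
  (forall n, w n = a \/ w n = b \/ w n = c) ->
  (forall n n', w n <> w n' -> w n.+1 <> w n'.+1) ->
  LSP (morph_inf f w).
Proof.
move=> H Hab Hbc Hac Hge Hw0 Hwm Hsucc v [x [y [Hxy [[i Hi] [i' Hi']]]]].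
have Hf := gf_size H.
case: v Hi Hi' => [|z v] Hi Hi'; first by move=> j.
have Wi : morph_inf f w i = x by have := Hi 0 isT; rewrite addn0.
have Wi' : morph_inf f w i' = y by have := Hi' 0 isT; rewrite addn0.
have Wv : forall j, j < size (z :: v) -> morph_inf f w (i.+1 + j) = nth alpha (z :: v) j.
  by move=> j Hj; rewrite addSnnS Hi //; apply: set_nth_default.
have Wv' : forall j, j < size (z :: v) -> morph_inf f w (i'.+1 + j) = nth alpha (z :: v) j.
  by move=> j Hj; rewrite addSnnS Hi' //; apply: set_nth_default.
case: (pos_block w Hf i.+1) => m [o [Ho Eo]].
case: (pos_block w Hf i'.+1) => m' [o' [Ho' Eo']].
have Zo : z = nth alpha (f (w m)) o.
  by have := Wv 0 isT; rewrite addn0 Eo (block_nth alpha) //= => <-.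
have Zo' : z = nth alpha (f (w m')) o'.
  by have := Wv' 0 isT; rewrite addn0 Eo' (block_nth alpha) //= => <-.
have Ao := gf_alpha H Ho; rewrite -Zo in Ao.
have Ao' := gf_alpha H Ho'; rewrite -Zo' in Ao'.
case: (eqVneq z alpha) => Hz.
  rewrite Hz eqxx in Ao Ao'.
  have Eo0 : o = 0 by apply/eqP.
  have Eo0' : o' = 0 by apply/eqP.
  rewrite Eo0 addn0 in Eo; rewrite Eo0' addn0 in Eo'.
  case: (prev_block H Eo) => Hm Wm.
  case: (prev_block H Eo') => Hm' Wm'.
  have Hne : w m <> w m'.
    move: Hm Hm' Wm Wm' => /prednK <- /prednK <- Wm Wm'.
    by apply: Hsucc; rewrite -Wm -Wm' Wi Wi'.
  have C := common_blocks (n := size (z :: v)) H Hne.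
  have C' : forall j, j < size (z :: v) -> j < size (f (w m)) /\ j < size (f (w m')) /\
      nth alpha (f (w m)) j = nth alpha (f (w m')) j.
    by apply: C => j Hj; rewrite -Eo -Eo' Wv // Wv'.
  move=> j Hj; rewrite (set_nth_default alpha) // -(Wv j Hj) Eo.
  case: (C' j Hj) => HjP [HjQ HPQ].
  rewrite (block_nth alpha) //.
  suff [Hja Ea] : j < size (f a) /\ nth alpha (f a) j = nth alpha (f (w m)) j.
    by rewrite -Ea -Hw0 -[j]add0n -(sB0 f w) (block_nth alpha) // Hw0.
  have HL : j < lcp (f (w m)) (f (w m')).
    have Hn : size (z :: v) <= lcp (f (w m)) (f (w m')).
      apply: (lcp_ge (d:=alpha)); first by move=> k Hk; case: (C' k Hk) => _ [_ ->].
        by have := (C' (size v) (ltnSn _)).1.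
      by have := (C' (size v) (ltnSn _)).2.1.
    by lia.
  case: (Hwm m) => [Ea|[Eb|Ec]]; first by rewrite Ea in HjP *.
    case: (Hwm m') => [Ea'|[Eb'|Ec']]; first by rewrite HPQ; rewrite Ea' in HjQ *.
      by exfalso; apply: Hne; rewrite Eb Eb'.
    by apply: (bc_case alpha Hge HL); left; rewrite Eb Ec'.
  case: (Hwm m') => [Ea'|[Eb'|Ec']]; first by rewrite HPQ; rewrite Ea' in HjQ *.
    by apply: (bc_case alpha Hge HL); right; rewrite Ec Eb'.
  by exfalso; apply: Hne; rewrite Ec Ec'.
have Ho0 : 0 < o by move: Ao; case: o {Ho Eo Zo} => //; rewrite (negbTE Hz).
have Ho0' : 0 < o' by move: Ao'; case: o' {Ho' Eo' Zo'} => //; rewrite (negbTE Hz).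
exfalso; apply: Hxy.
have Ei : i = sB f w m + o.-1 by lia.
have Ei' : i' = sB f w m' + o'.-1 by lia.
rewrite -Wi -Wi' Ei Ei' !(block_nth alpha) //; try lia.
rewrite !(gf_pred H) ?Ho0 ?Ho0' //.
by rewrite -Zo -Zo'.
Qed.

Definition w3 (A : finType) (a b c : A) : iword A := fun n => nth a [:: a; b; c] (n %% 3).

Lemma w3_eq (A : finType) (a b c : A) n n' : a <> b -> b <> c -> a <> c ->
  w3 a b c n = w3 a b c n' -> n %% 3 = n' %% 3.
Proof.
move=> Hab Hbc Hac; rewrite /w3.
have : n %% 3 < 3 by rewrite ltn_mod.
have : n' %% 3 < 3 by rewrite ltn_mod.
case: (n %% 3) => [|[|[|k]]] //; case: (n' %% 3) => [|[|[|k']]] //= _ _ E;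
  congruence.
Qed.

Lemma w3_mem (A : finType) (a b c : A) n :
  w3 a b c n = a \/ w3 a b c n = b \/ w3 a b c n = c.
Proof.
rewrite /w3; have : n %% 3 < 3 by rewrite ltn_mod.
case: (n %% 3) => [|[|[|k]]] //=; tauto.
Qed.

Lemma w3_LSP (A : finType) (a b c : A) : a <> b -> b <> c -> a <> c -> LSP (w3 a b c).
Proof.
move=> Hab Hbc Hac [|z u] [x [y [Hxy [[i Hi] [i' Hi']]]]]; first by move=> j.
exfalso; apply: Hxy.
have E1 := Hi 1 isT; have E1' := Hi' 1 isT.
have E : w3 a b c (i + 1) = w3 a b c (i' + 1) by rewrite E1 E1'.
have M := w3_eq Hab Hbc Hac E.
have M2 : i %% 3 = i' %% 3 by lia.
have := Hi 0 isT; have := Hi' 0 isT; rewrite !addn0 /= /w3 M2 => -> -> //.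
Qed.

Lemma w3_fragile' (A : finType) (a b c : A) : a <> b -> fragile a b c (w3 a b c).
Proof.
move=> Hab; exists [::], a, b; split => //; split; first by case=> //.
split; first by exists 0; case=> [|[|]].
by exists 1; case=> [|[|]].
Qed.

Lemma w3_succ (A : finType) (a b c : A) : a <> b -> b <> c -> a <> c ->
  forall n n', w3 a b c n <> w3 a b c n' -> w3 a b c n.+1 <> w3 a b c n'.+1.
Proof.
move=> Hab Hbc Hac n n' Hne E; apply: Hne.
have M := w3_eq Hab Hbc Hac E.
have M2 : n %% 3 = n' %% 3 by lia.
by rewrite /w3 M2.
Qed.

Unset Implicit Arguments.
Set Strict Implicit.

Theorem corollary1 (A : finType) (f : A -> seq A) (a b c : A) :
  bLSP f -> a <> b -> b <> c -> a <> c ->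
  (LSP_breaking f a b c <-> lcp (f a) (f b) < lcp (f b) (f c)).
Proof.
move=> [alpha Hg] Hab Hbc Hac.
have H : goodf f alpha := Hg.
split; last exact: breaking_if H.
move=> Hbr; rewrite ltnNge; apply/negP => Hge.
apply: (Hbr (w3 a b c)); first exact: w3_fragile'.
  exact: w3_LSP.
apply: (LSP_img H Hab Hbc Hac Hge) => //.
  exact: w3_mem.
exact: w3_succ.
Qed.
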